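(* Let $(X_\lambda,x_\lambda)_{\lambda\in\Lambda}$ be a family of based, wep-connected spaces such that each $X_\lambda$ is locally path connected at $x_\lambda$ and $\{x_\lambda\}$ is closed in $X_\lambda$. Then the wedge $\bigvee_\lambda X_\lambda$ is wep-connected.
   Context: The wedge $\bigvee_\lambda X_\lambda$ is the quotient of the disjoint union $\bigsqcup_\lambda X_\lambda$ identifying all basepoints $x_\lambda$ to one point. For a space $Y$, $P(Y)$ is the space of paths $I=[0,1]\to Y$ with the compact-open topology. A path $p:I\to Y$ is well-ended (in $Y$) if for every open neighborhood $\mathcal U$ of $p$ in $P(Y)$ there are open neighborhoods $V_0,V_1$ of $p(0),p(1)$ in $Y$ such that for all $a\in V_0,b\in V_1$ there is $q\in\mathcal U$ with $q(0)=a$, $q(1)=b$. A space $Y$ is wep-connected if any two points of $Y$ are joined by a well-ended path in $Y$. *)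

(* Defs.v *)
From Stdlib Require Import Reals List.
Open Scope R_scope.

Definition is_topology {X : Type} (op : (X -> Prop) -> Prop) : Prop :=
  op (fun _ => True) /\
  (forall U V, op U -> op V -> op (fun x => U x /\ V x)) /\
  (forall F : (X -> Prop) -> Prop, (forall U, F U -> op U) ->
      op (fun x => exists U, F U /\ U x)).

Definition continuous {A B : Type} (opA : (A -> Prop) -> Prop)
  (opB : (B -> Prop) -> Prop) (f : A -> B) : Prop :=
  forall U, opB U -> opA (fun a => U (f a)).

Definition compact {A : Type} (opA : (A -> Prop) -> Prop) (K : A -> Prop) : Prop :=
  forall F : (A -> Prop) -> Prop, (forall U, F U -> opA U) ->
    (forall a, K a -> exists U, F U /\ U a) ->
    exists l : list (A -> Prop), (forall U, In U l -> F U) /\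
      (forall a, K a -> exists U, In U l /\ U a).

Definition R_open (U : R -> Prop) : Prop :=
  forall x, U x -> exists e, 0 < e /\ forall y, Rabs (y - x) < e -> U y.

Definition I := {t : R | 0 <= t <= 1}.

Definition I_open (V : I -> Prop) : Prop :=
  exists U, R_open U /\ forall t : I, V t <-> U (proj1_sig t).

Lemma I0_prf : 0 <= 0 <= 1. Proof. split; [apply Rle_refl | apply Rle_0_1]. Qed.
Lemma I1_prf : 0 <= 1 <= 1. Proof. split; [apply Rle_0_1 | apply Rle_refl]. Qed.
Definition I0 : I := exist _ 0 I0_prf.
Definition I1 : I := exist _ 1 I1_prf.

Definition Path {Y : Type} (opY : (Y -> Prop) -> Prop) : Type :=
  {p : I -> Y | continuous I_open opY p}.

Definition pth {Y : Type} {opY : (Y -> Prop) -> Prop} (p : Path opY) : I -> Y :=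
  proj1_sig p.

Definition co_subbasic {Y : Type} (opY : (Y -> Prop) -> Prop)
  (S : Path opY -> Prop) : Prop :=
  exists (K : I -> Prop) (U : Y -> Prop), compact I_open K /\ opY U /\
    forall p, S p <-> (forall t, K t -> U (pth p t)).

(* Compact-open topology: generated by the subbasis above
   (open = union of finite intersections of subbasic sets). *)
Definition CO_open {Y : Type} (opY : (Y -> Prop) -> Prop)
  (W : Path opY -> Prop) : Prop :=
  forall p, W p -> exists l : list (Path opY -> Prop),
    (forall S, In S l -> co_subbasic opY S) /\
    (forall S, In S l -> S p) /\
    (forall q, (forall S, In S l -> S q) -> W q).

Definition well_ended {Y : Type} (opY : (Y -> Prop) -> Prop) (p : Path opY) : Prop :=
  forall Ucal : Path opY -> Prop, CO_open opY Ucal -> Ucal p ->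
    exists V0 V1 : Y -> Prop, opY V0 /\ opY V1 /\ V0 (pth p I0) /\ V1 (pth p I1) /\
      forall a b, V0 a -> V1 b ->
        exists q : Path opY, Ucal q /\ pth q I0 = a /\ pth q I1 = b.

Definition wep_connected {Y : Type} (opY : (Y -> Prop) -> Prop) : Prop :=
  forall y z : Y, exists p : Path opY,
    well_ended opY p /\ pth p I0 = y /\ pth p I1 = z.

Definition lpc_at {Y : Type} (opY : (Y -> Prop) -> Prop) (x : Y) : Prop :=
  forall U, opY U -> U x ->
    exists V, opY V /\ V x /\ (forall y, V y -> U y) /\
      forall a b, V a -> V b ->
        exists p : Path opY, pth p I0 = a /\ pth p I1 = b /\ forall t, V (pth p t).

(* Wedge: quotient of the disjoint union identifying all basepoints. *)
Section Wedge.
Context {L : Type} {X : L -> Type} (op : forall l, (X l -> Prop) -> Prop)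
  (x0 : forall l, X l).

Definition dsum := {l : L & X l}.

Definition dsum_open (U : dsum -> Prop) : Prop :=
  forall l, op l (fun x => U (existT X l x)).

Definition wedge_rel (a b : dsum) : Prop :=
  a = b \/ (projT2 a = x0 (projT1 a) /\ projT2 b = x0 (projT1 b)).

Definition wedge : Type := {P : dsum -> Prop | exists a, P = wedge_rel a}.

Definition wedge_q (a : dsum) : wedge :=
  exist _ (wedge_rel a) (ex_intro _ a eq_refl).

Definition wedge_open (V : wedge -> Prop) : Prop :=
  dsum_open (fun a => V (wedge_q a)).
End Wedge.

(* Main.v *)
Require Import Defs.
From Stdlib Require Import Reals Lra List Classical FunctionalExtensionality PropExtensionality ProofIrrelevance Eqdep.
Open Scope R_scope.

Lemma op_ext {X : Type} (op : (X -> Prop) -> Prop) (U V : X -> Prop) :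
  op U -> (forall x, U x <-> V x) -> op V.
Proof.
  intros H E. assert (U = V) as ->; [|exact H].
  apply functional_extensionality; intro x; apply propositional_extensionality; apply E.
Qed.

Lemma I_eq (a b : I) : proj1_sig a = proj1_sig b -> a = b.
Proof.
  destruct a as [a Ha], b as [b Hb]; simpl; intro E; subst b.
  f_equal; apply proof_irrelevance.
Qed.

Definition clamp (x : R) : R := Rmax 0 (Rmin x 1).

Lemma clamp_prf (x : R) : 0 <= clamp x <= 1.
Proof. unfold clamp, Rmax, Rmin; repeat destruct Rle_dec; lra. Qed.

Definition mkI (x : R) : I := exist _ (clamp x) (clamp_prf x).

Lemma clamp_lip (a b : R) : Rabs (clamp a - clamp b) <= Rabs (a - b).
Proof.
  unfold clamp, Rmax, Rmin; repeat destruct Rle_dec; unfold Rabs;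
  repeat destruct Rcase_abs; lra.
Qed.

Lemma cont_lin (g : R -> R) (k : R) (Hk : 0 < k)
  (Hg : forall x y, Rabs (g x - g y) <= k * Rabs (x - y)) :
  continuous I_open I_open (fun t : I => mkI (g (proj1_sig t))).
Proof.
  intros V [U [HU HV]].
  exists (fun x => U (clamp (g x))). split.
  - intros x Hx. destruct (HU _ Hx) as [e [He He']].
    exists (e / k). split. { apply Rdiv_lt_0_compat; lra. }
    intros y Hy. apply He'.
    apply Rle_lt_trans with (Rabs (g y - g x)). apply clamp_lip.
    apply Rle_lt_trans with (k * Rabs (y - x)). apply Hg.
    apply Rmult_lt_reg_l with (/ k). apply Rinv_0_lt_compat; lra.
    rewrite <- Rmult_assoc, Rinv_l by lra. rewrite Rmult_1_l.
    unfold Rdiv in Hy. rewrite Rmult_comm. exact Hy.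
  - intro t. rewrite HV. simpl. tauto.
Qed.

Definition alpha (t : I) : I := mkI (2 * proj1_sig t).
Definition beta (t : I) : I := mkI (2 * proj1_sig t - 1).

Lemma alpha_cont : continuous I_open I_open alpha.
Proof.
  apply (cont_lin (fun x => 2 * x) 2); [lra|].
  intros x y. replace (2*x - 2*y) with (2*(x-y)) by ring.
  rewrite Rabs_mult, Rabs_right by lra. lra.
Qed.

Lemma beta_cont : continuous I_open I_open beta.
Proof.
  apply (cont_lin (fun x => 2 * x - 1) 2); [lra|].
  intros x y. replace (2*x - 1 - (2*y - 1)) with (2*(x-y)) by ring.
  rewrite Rabs_mult, Rabs_right by lra. lra.
Qed.

Lemma alpha_half (t : I) : proj1_sig t = 1/2 -> alpha t = I1.
Proof. intro H. apply I_eq. simpl. rewrite H. unfold clamp, Rmax, Rmin; repeat destruct Rle_dec; lra. Qed.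
Lemma beta_half (t : I) : proj1_sig t = 1/2 -> beta t = I0.
Proof. intro H. apply I_eq. simpl. rewrite H. unfold clamp, Rmax, Rmin; repeat destruct Rle_dec; lra. Qed.
Lemma alpha_0 : alpha I0 = I0.
Proof. apply I_eq. simpl. unfold clamp, Rmax, Rmin; repeat destruct Rle_dec; lra. Qed.
Lemma beta_1 : beta I1 = I1.
Proof. apply I_eq. simpl. unfold clamp, Rmax, Rmin; repeat destruct Rle_dec; lra. Qed.

Lemma cont_comp {A B C : Type} (opA : (A -> Prop) -> Prop) (opB : (B -> Prop) -> Prop)
  (opC : (C -> Prop) -> Prop) (f : A -> B) (g : B -> C) :
  continuous opA opB f -> continuous opB opC g -> continuous opA opC (fun a => g (f a)).
Proof. intros Hf Hg U HU. exact (Hf _ (Hg _ HU)). Qed.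

Lemma lift_list (F : (I -> Prop) -> Prop) (f : I -> I) (C : I -> Prop) (l' : list (I -> Prop)) :
  (forall V, In V l' -> (exists U, F U /\ forall t, V t <-> U (f t)) \/ (forall t, V t <-> ~ C t)) ->
  exists l, (forall U, In U l -> F U) /\
    forall V, In V l' -> (forall t, V t <-> ~ C t) \/ exists U, In U l /\ forall t, V t <-> U (f t).
Proof.
  induction l' as [|V l' IH]; intro H.
  - exists nil. split; intros ? [].
  - destruct IH as [l [H1 H2]]. { intros W HW. apply H. right. exact HW. }
    destruct (H V (or_introl eq_refl)) as [[U [HU HV]] | HV].
    + exists (U :: l). split.
      * intros U' [<- | HU']; auto.
      * intros W [<- | HW]. right. exists U; split; [left; reflexivity | exact HV].
        destruct (H2 W HW) as [? | [U' [HU' ?]]]; [left; auto | right; exists U'; split; [right|]; auto].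
    + exists l. split; [exact H1|].
      intros W [<- | HW]. left; exact HV. apply H2; exact HW.
Qed.

Lemma compact_image (K : I -> Prop) (f : I -> I) (C : I -> Prop) :
  Defs.compact I_open K -> continuous I_open I_open f -> I_open (fun t => ~ C t) ->
  Defs.compact I_open (fun u => exists t, K t /\ C t /\ u = f t).
Proof.
  intros HK Hf HC F HFo Hcov.
  set (F' := fun V : I -> Prop => (exists U, F U /\ forall t, V t <-> U (f t)) \/ (forall t, V t <-> ~ C t)).
  destruct (HK F') as [l' [Hl'1 Hl'2]].
  - intros V [[U [HU HV]] | HV].
    + apply op_ext with (fun t => U (f t)). apply Hf, HFo, HU. intro t; rewrite HV; tauto.
    + apply op_ext with (fun t => ~ C t). exact HC. intro t; rewrite HV; tauto.
  - intros t Ht. destruct (classic (C t)) as [Hc | Hc].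
    + destruct (Hcov (f t)) as [U [HU HUt]]. exists t; auto.
      exists (fun t => U (f t)). split; [left; exists U; split; [exact HU| tauto] | exact HUt].
    + exists (fun t => ~ C t). split; [right; tauto | exact Hc].
  - destruct (lift_list F f C l' Hl'1) as [l [Hl1 Hl2]].
    exists l. split; [exact Hl1|].
    intros u [t [Ht [Hc ->]]].
    destruct (Hl'2 t Ht) as [V [HV HVt]].
    destruct (Hl2 V HV) as [HV' | [U [HU HU']]].
    + exfalso. apply HV' in HVt. contradiction.
    + exists U. split; [exact HU|]. apply HU'. exact HVt.
Qed.

Definition cat_fun {Y : Type} (r s : I -> Y) (t : I) : Y :=
  if Rle_dec (proj1_sig t) (1/2) then r (alpha t) else s (beta t).

Lemma R_open_and (A B : R -> Prop) : R_open A -> R_open B -> R_open (fun x => A x /\ B x).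
Proof.
  intros HA HB x [Ha Hb]. destruct (HA x Ha) as [e1 [H1 H1']]. destruct (HB x Hb) as [e2 [H2 H2']].
  exists (Rmin e1 e2). split. apply Rmin_glb_lt; auto.
  intros y Hy. split; [apply H1' | apply H2']; eapply Rlt_le_trans; eauto; [apply Rmin_l | apply Rmin_r].
Qed.

Lemma R_open_or3 (A B C : R -> Prop) : R_open A -> R_open B -> R_open C ->
  R_open (fun x => A x \/ B x \/ C x).
Proof.
  intros HA HB HC x [Ha | [Hb | Hc]].
  - destruct (HA x Ha) as [e [He He']]. exists e; split; auto.
  - destruct (HB x Hb) as [e [He He']]. exists e; split; auto.
  - destruct (HC x Hc) as [e [He He']]. exists e; split; auto.
Qed.

Lemma R_open_lt (c : R) : R_open (fun x => x < c).
Proof. intros x Hx. exists (c - x). split. lra. intros y Hy. unfold Rabs in Hy; destruct Rcase_abs; lra. Qed.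
Lemma R_open_gt (c : R) : R_open (fun x => c < x).
Proof. intros x Hx. exists (x - c). split. lra. intros y Hy. unfold Rabs in Hy; destruct Rcase_abs; lra. Qed.

Lemma cat_cont {Y : Type} (opY : (Y -> Prop) -> Prop) (r s : I -> Y) :
  continuous I_open opY r -> continuous I_open opY s -> r I1 = s I0 ->
  continuous I_open opY (cat_fun r s).
Proof.
  intros Hr Hs E U HU.
  destruct (cont_comp _ _ _ _ _ alpha_cont Hr U HU) as [A [HA HAe]].
  destruct (cont_comp _ _ _ _ _ beta_cont Hs U HU) as [B [HB HBe]].
  exists (fun x => (x < 1/2 /\ A x) \/ (1/2 < x /\ B x) \/ (A x /\ B x)). split.
  - apply R_open_or3; apply R_open_and; auto using R_open_lt, R_open_gt.
  - intro t. unfold cat_fun. simpl in HAe, HBe.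
    destruct (Rle_dec (proj1_sig t) (1/2)) as [Hle | Hgt].
    + rewrite HAe. destruct (Rlt_le_dec (proj1_sig t) (1/2)) as [Hlt | Hge].
      * split. intro; left; auto. intros [[_ ?] | [[? _] | [? _]]]; auto. lra.
      * assert (Ht : proj1_sig t = 1/2) by lra.
        assert (A (proj1_sig t) <-> B (proj1_sig t)).
        { rewrite <- HAe, <- HBe, alpha_half, beta_half by exact Ht. rewrite E. tauto. }
        split. intro; right; right; split; tauto.
        intros [[? _] | [[? _] | [? _]]]; auto; lra.
    + rewrite HBe. split. intro; right; left; split; auto; lra.
      intros [[? _] | [[_ ?] | [_ ?]]]; auto; lra.
Qed.

Definition cat {Y : Type} {opY : (Y -> Prop) -> Prop} (r s : Path opY) (H : pth r I1 = pth s I0) : Path opY :=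
  exist _ (cat_fun (pth r) (pth s)) (cat_cont opY _ _ (proj2_sig r) (proj2_sig s) H).

Lemma cat_I0 {Y : Type} {opY : (Y -> Prop) -> Prop} (r s : Path opY) H : pth (cat r s H) I0 = pth r I0.
Proof. unfold cat, pth at 1; simpl. unfold cat_fun. simpl. destruct Rle_dec; [|lra]. rewrite alpha_0. reflexivity. Qed.
Lemma cat_I1 {Y : Type} {opY : (Y -> Prop) -> Prop} (r s : Path opY) H : pth (cat r s H) I1 = pth s I1.
Proof. unfold cat, pth at 1; simpl. unfold cat_fun. simpl. destruct Rle_dec; [lra|]. rewrite beta_1. reflexivity. Qed.

Lemma co_split {Y : Type} (opY : (Y -> Prop) -> Prop) (l : list (Path opY -> Prop))
  (r s : Path opY) (H : pth r I1 = pth s I0) :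
  (forall S, In S l -> co_subbasic opY S) -> (forall S, In S l -> S (cat r s H)) ->
  exists lr ls, (forall S, In S lr -> co_subbasic opY S) /\ (forall S, In S lr -> S r) /\
    (forall S, In S ls -> co_subbasic opY S) /\ (forall S, In S ls -> S s) /\
    forall r' s' (H' : pth r' I1 = pth s' I0),
      (forall S, In S lr -> S r') -> (forall S, In S ls -> S s') -> forall S, In S l -> S (cat r' s' H').
Proof.
  induction l as [|S l IH]; intros Hsub Hin.
  - exists nil, nil. repeat split; try (intros ? []). intros. destruct H2.
  - destruct IH as [lr [ls [H1 [H2 [H3 [H4 H5]]]]]].
    { intros; apply Hsub; right; auto. } { intros; apply Hin; right; auto. }
    destruct (Hsub S (or_introl eq_refl)) as [K [U [HK [HU HS]]]].
    set (Sr := fun p : Path opY => forall t, K t -> proj1_sig t <= 1/2 -> U (pth p (alpha t))).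
    set (Ss := fun p : Path opY => forall t, K t -> 1/2 <= proj1_sig t -> U (pth p (beta t))).
    assert (HSc := Hin S (or_introl eq_refl)). rewrite HS in HSc.
    exists (Sr :: lr), (Ss :: ls). repeat split.
    + intros S' [<- | HS']; [| first [exact (H1 _ HS')|exact (H2 _ HS')|exact (H3 _ HS')|exact (H4 _ HS')]].
      exists (fun u => exists t, K t /\ proj1_sig t <= 1/2 /\ u = alpha t), U. split; [|split; [exact HU|]].
      * apply compact_image; auto using alpha_cont.
        exists (fun x => 1/2 < x). split. apply R_open_gt. intro t; split; intro; lra.
      * intro p. split. intros Hp u [t [Ht [Hl ->]]]. apply Hp; auto.
        intros Hp t Ht Hl. apply Hp. exists t; auto.

    + intros S' [<- | HS']; [| first [exact (H1 _ HS')|exact (H2 _ HS')|exact (H3 _ HS')|exact (H4 _ HS')]].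
      intros t Ht Hl. specialize (HSc t Ht). unfold cat, pth in HSc; simpl in HSc; unfold cat_fun in HSc.
      destruct Rle_dec; [exact HSc | lra].
    + intros S' [<- | HS']; [| first [exact (H1 _ HS')|exact (H2 _ HS')|exact (H3 _ HS')|exact (H4 _ HS')]].
      exists (fun u => exists t, K t /\ 1/2 <= proj1_sig t /\ u = beta t), U. split; [|split; [exact HU|]].
      * apply compact_image; auto using beta_cont.
        exists (fun x => x < 1/2). split. apply R_open_lt. intro t; split; intro; lra.
      * intro p. split. intros Hp u [t [Ht [Hl ->]]]. apply Hp; auto.
        intros Hp t Ht Hl. apply Hp. exists t; auto.
    + intros S' [<- | HS']; [| first [exact (H1 _ HS')|exact (H2 _ HS')|exact (H3 _ HS')|exact (H4 _ HS')]].
      intros t Ht Hl. specialize (HSc t Ht). unfold cat, pth in HSc; simpl in HSc; unfold cat_fun in HSc.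
      destruct Rle_dec; [|exact HSc].
      assert (Ht' : proj1_sig t = 1/2) by lra.
      rewrite alpha_half in HSc by exact Ht'. rewrite beta_half by exact Ht'.
      unfold pth in *. rewrite <- H. exact HSc.
    + intros r' s' H' Hr Hs S' [<- | HS'].
      * rewrite HS. intros t Ht. unfold cat, pth at 1; simpl; unfold cat_fun.
        destruct Rle_dec.
        -- apply (Hr Sr (or_introl eq_refl)); auto.
        -- apply (Hs Ss (or_introl eq_refl)); auto; lra.
      * apply H5; auto; intros; [apply Hr | apply Hs]; right; auto.
Qed.

Definition LWE {Y : Type} (opY : (Y -> Prop) -> Prop) (p : Path opY) : Prop :=
  forall Ucal : Path opY -> Prop, CO_open opY Ucal -> Ucal p ->
    exists V0 : Y -> Prop, opY V0 /\ V0 (pth p I0) /\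
      forall a, V0 a -> exists q : Path opY, Ucal q /\ pth q I0 = a /\ pth q I1 = pth p I1.

Definition RWE {Y : Type} (opY : (Y -> Prop) -> Prop) (p : Path opY) : Prop :=
  forall Ucal : Path opY -> Prop, CO_open opY Ucal -> Ucal p ->
    exists V1 : Y -> Prop, opY V1 /\ V1 (pth p I1) /\
      forall b, V1 b -> exists q : Path opY, Ucal q /\ pth q I0 = pth p I0 /\ pth q I1 = b.

Lemma cat_we {Y : Type} (opY : (Y -> Prop) -> Prop) (r s : Path opY) (H : pth r I1 = pth s I0) :
  LWE opY r -> RWE opY s -> well_ended opY (cat r s H).
Proof.
  intros Hr Hs Ucal HUo HUp.
  destruct (HUo _ HUp) as [l [Hl1 [Hl2 Hl3]]].
  destruct (co_split opY l r s H Hl1 Hl2) as [lr [ls [H1 [H2 [H3 [H4 H5]]]]]].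
  destruct (Hr (fun p => forall S, In S lr -> S p)) as [V0 [HV0 [HV0p HV0q]]].
  { intros p Hp. exists lr. auto. } { exact H2. }
  destruct (Hs (fun p => forall S, In S ls -> S p)) as [V1 [HV1 [HV1p HV1q]]].
  { intros p Hp. exists ls. auto. } { exact H4. }
  exists V0, V1. split; [auto|]. split; [auto|].
  rewrite cat_I0, cat_I1. split; [auto|]. split; [auto|].
  intros a b Ha Hb.
  destruct (HV0q a Ha) as [r' [Hr' [Hr'0 Hr'1]]].
  destruct (HV1q b Hb) as [s' [Hs' [Hs'0 Hs'1]]].
  assert (H' : pth r' I1 = pth s' I0) by congruence.
  exists (cat r' s' H'). split. apply Hl3. apply H5; auto.
  rewrite cat_I0, cat_I1. auto.
Qed.

Lemma top_empty {X : Type} (op : (X -> Prop) -> Prop) : is_topology op -> op (fun _ => False).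
Proof.
  intros [_ [_ Hu]]. apply op_ext with (fun x => exists U, (fun _ : X -> Prop => False) U /\ U x).
  apply Hu; intros U []. intro x; split; [intros [U [[] _]] | intros []].
Qed.

Lemma constp_cont {Y : Type} (opY : (Y -> Prop) -> Prop) (w : Y) :
  continuous I_open opY (fun _ : I => w).
Proof.
  intros U HU. exists (fun _ => U w). split.
  - intros x Hx. exists 1. split; [lra | auto].
  - intro t; tauto.
Qed.

Definition constp {Y : Type} (opY : (Y -> Prop) -> Prop) (w : Y) : Path opY :=
  exist _ (fun _ : I => w) (constp_cont opY w).


Lemma wq_rel {L : Type} {X : L -> Type} (x0 : forall l, X l) (a b : dsum) :
  wedge_q x0 a = wedge_q x0 b -> wedge_rel x0 a b.
Proof.
  intro E. apply (f_equal (@proj1_sig _ _)) in E. simpl in E.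
  rewrite E. left; reflexivity.
Qed.

Lemma wq_inj {L : Type} {X : L -> Type} (x0 : forall l, X l) (m l : L) (x' : X m) (x : X l) :
  wedge_q x0 (existT X m x') = wedge_q x0 (existT X l x) -> x <> x0 l ->
  existT X m x' = existT X l x.
Proof.
  intros E Hx. destruct (wq_rel x0 _ _ E) as [H | [_ H]]; [exact H|].
  simpl in H. contradiction.
Qed.

Lemma wedge_eq {L : Type} {X : L -> Type} (x0 : forall l, X l) (w1 w2 : wedge x0) :
  proj1_sig w1 = proj1_sig w2 -> w1 = w2.
Proof.
  destruct w1 as [P1 H1], w2 as [P2 H2]; simpl; intro E; subst P2.
  f_equal; apply proof_irrelevance.
Qed.

Lemma base_eq {L : Type} {X : L -> Type} (x0 : forall l, X l) (l m : L) :
  wedge_q x0 (existT X l (x0 l)) = wedge_q x0 (existT X m (x0 m)).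
Proof.
  apply wedge_eq. simpl. apply functional_extensionality; intro c.
  apply propositional_extensionality. unfold wedge_rel; simpl.
  split; intros [H | [_ H]]; right; split; auto; subst c; reflexivity.
Qed.

Lemma wedge_surj {L : Type} {X : L -> Type} (x0 : forall l, X l) (w : wedge x0) :
  exists a, w = wedge_q x0 a.
Proof.
  destruct w as [P [a Ha]]. exists a. apply wedge_eq. simpl. exact Ha.
Qed.

Lemma iq_cont {L : Type} {X : L -> Type} (op : forall l, (X l -> Prop) -> Prop)
  (x0 : forall l, X l) (l : L) :
  continuous (op l) (wedge_open op x0) (fun x => wedge_q x0 (existT X l x)).
Proof. intros V HV. exact (HV l). Qed.

Definition push {L : Type} {X : L -> Type} (op : forall l, (X l -> Prop) -> Prop)
  (x0 : forall l, X l) (l : L) (p : Path (op l)) : Path (wedge_open op x0) :=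
  exist _ (fun t => wedge_q x0 (existT X l (pth p t)))
    (cont_comp _ _ _ _ _ (proj2_sig p) (iq_cont op x0 l)).

Lemma img_open {L : Type} {X : L -> Type} (op : forall l, (X l -> Prop) -> Prop)
  (x0 : forall l, X l) (Htop : forall l, is_topology (op l)) (l : L) (A : X l -> Prop) :
  op l A -> (forall x, A x -> x <> x0 l) ->
  wedge_open op x0 (fun w => exists x, A x /\ w = wedge_q x0 (existT X l x)).
Proof.
  intros HA HA0 m. destruct (classic (m = l)) as [E | E].
  - subst m. apply op_ext with A; [exact HA|].
    intro x'. split. intro H; exists x'; auto.
    intros [x [Hx Ex]]. apply wq_inj in Ex; [|auto].
    apply inj_pair2 in Ex. subst; auto.
  - apply op_ext with (fun _ => False). apply top_empty, Htop.
    intro x'. split; [intros []|]. intros [x [Hx Ex]]. apply wq_inj in Ex; [|auto].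
    apply (f_equal (@projT1 _ _)) in Ex. simpl in Ex. contradiction.
Qed.

Lemma wedge_True {L : Type} {X : L -> Type} (op : forall l, (X l -> Prop) -> Prop)
  (x0 : forall l, X l) (Htop : forall l, is_topology (op l)) :
  wedge_open op x0 (fun _ => True).
Proof. intro l. apply (proj1 (Htop l)). Qed.

Lemma wedge_inter {L : Type} {X : L -> Type} (op : forall l, (X l -> Prop) -> Prop)
  (x0 : forall l, X l) (Htop : forall l, is_topology (op l)) U V :
  wedge_open op x0 U -> wedge_open op x0 V -> wedge_open op x0 (fun w => U w /\ V w).
Proof. intros HU HV l. apply (proj1 (proj2 (Htop l))); auto. Qed.

Lemma fin_inter {Y : Type} (opY : (Y -> Prop) -> Prop) {A : Type} (P : A -> Y -> Prop) :
  opY (fun _ => True) -> (forall U V, opY U -> opY V -> opY (fun x => U x /\ V x)) ->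
  forall l : list A, (forall S, In S l -> opY (P S)) -> opY (fun w => forall S, In S l -> P S w).
Proof.
  intros HT HI. induction l as [|S l IH]; intro H.
  - apply op_ext with (fun _ => True); [exact HT|]. intro; split; [intros _ ? []|auto].
  - apply op_ext with (fun w => P S w /\ forall S', In S' l -> P S' w).
    apply HI; [apply H; left; auto | apply IH; intros; apply H; right; auto].
    intro w; split. intros [H1 H2] S' [<- | HS']; auto.
    intro H'; split; [apply H'; left; auto | intros; apply H'; right; auto].
Qed.

Lemma W_open {L : Type} {X : L -> Type} (op : forall l, (X l -> Prop) -> Prop)
  (x0 : forall l, X l) (Htop : forall l, is_topology (op l)) (l : list (Path (wedge_open op x0) -> Prop)) :
  (forall S, In S l -> co_subbasic (wedge_open op x0) S) ->
  wedge_open op x0 (fun w => forall S, In S l -> S (constp (wedge_open op x0) w)).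
Proof.
  intro Hl. apply fin_inter; [apply wedge_True; auto | apply wedge_inter; auto |].
  intros S HS. destruct (Hl S HS) as [K [U [HK [HU HSe]]]].
  destruct (classic (exists t, K t)) as [[t0 Ht0] | Hne].
  - apply op_ext with U; [exact HU|]. intro w. rewrite HSe. simpl.
    split; [intros; auto | intro H; apply (H t0 Ht0)].
  - apply op_ext with (fun _ => True); [apply wedge_True; auto|]. intro w. rewrite HSe.
    split; [intros _ t Ht; exfalso; apply Hne; exists t; auto | auto].
Qed.

Definition goodN {L : Type} {X : L -> Type} (op : forall l, (X l -> Prop) -> Prop)
  (x0 : forall l, X l) (W : wedge x0 -> Prop) (k : L) (N : X k -> Prop) : Prop :=
  op k N /\ N (x0 k) /\ (forall x, N x -> W (wedge_q x0 (existT X k x))) /\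
  (forall a b, N a -> N b -> exists p : Path (op k), pth p I0 = a /\ pth p I1 = b /\ forall t, N (pth p t)).

Lemma goodN_ex {L : Type} {X : L -> Type} (op : forall l, (X l -> Prop) -> Prop)
  (x0 : forall l, X l) (Hlpc : forall l, lpc_at (op l) (x0 l)) (W : wedge x0 -> Prop) (l0 : L) :
  wedge_open op x0 W -> W (wedge_q x0 (existT X l0 (x0 l0))) -> forall k, exists N, goodN op x0 W k N.
Proof.
  intros HW Hb k. destruct (Hlpc k (fun x => W (wedge_q x0 (existT X k x)))) as [N [HN1 [HN2 [HN3 HN4]]]].
  apply HW. rewrite (base_eq x0 k l0). exact Hb.
  exists N. repeat split; auto.
Qed.

Lemma V0_open {L : Type} {X : L -> Type} (op : forall l, (X l -> Prop) -> Prop)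
  (x0 : forall l, X l) (Htop : forall l, is_topology (op l)) (W : wedge x0 -> Prop) :
  (forall k, exists N, goodN op x0 W k N) ->
  wedge_open op x0 (fun w => exists k x N, goodN op x0 W k N /\ N x /\ w = wedge_q x0 (existT X k x)).
Proof.
  intros Hg m.
  apply op_ext with (fun x => exists N, goodN op x0 W m N /\ N x).
  - apply (proj2 (proj2 (Htop m))). intros N [HN _]; exact HN.
  - intro x'. split.
    + intros [N [HN Hx]]. exists m, x', N. auto.
    + intros [k [x [N [HN [Hx E]]]]]. destruct (wq_rel x0 _ _ E) as [E' | [E1 _]].
      * assert (m = k) by (apply (f_equal (@projT1 _ _)) in E'; exact E'). subst k.
        apply inj_pair2 in E'. subst. exists N; auto.
      * simpl in E1. subst x'. destruct (Hg m) as [N' HN']. exists N'. split; auto. apply HN'.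
Qed.

Lemma const_LWE {L : Type} {X : L -> Type} (op : forall l, (X l -> Prop) -> Prop)
  (x0 : forall l, X l) (Htop : forall l, is_topology (op l)) (Hlpc : forall l, lpc_at (op l) (x0 l)) (l0 : L) :
  LWE (wedge_open op x0) (constp (wedge_open op x0) (wedge_q x0 (existT X l0 (x0 l0)))).
Proof.
  intros Ucal HUo HUp. destruct (HUo _ HUp) as [l [Hl1 [Hl2 Hl3]]].
  set (W := fun w => forall S, In S l -> S (constp (wedge_open op x0) w)).
  assert (HW : wedge_open op x0 W) by (apply W_open; auto).
  assert (Hg : forall k, exists N, goodN op x0 W k N) by (apply (goodN_ex op x0 Hlpc W l0); auto).
  exists (fun w => exists k x N, goodN op x0 W k N /\ N x /\ w = wedge_q x0 (existT X k x)).
  split; [apply V0_open; auto|]. split.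
  - destruct (Hg l0) as [N HN]. exists l0, (x0 l0), N. split; auto. split; [apply HN | reflexivity].
  - intros a [k [x [N [[HN1 [HN2 [HN3 HN4]]] [Hx ->]]]]].
    destruct (HN4 x (x0 k) Hx HN2) as [p [Hp0 [Hp1 Hpt]]].
    exists (push op x0 k p). split; [|split].
    + apply Hl3. intros S HS. destruct (Hl1 S HS) as [K [U [HK [HU HSe]]]].
      rewrite HSe. intros t Ht. specialize (HN3 _ (Hpt t) S HS). rewrite HSe in HN3.
      exact (HN3 t Ht).
    + simpl. unfold pth in *. simpl. rewrite Hp0. reflexivity.
    + refine (eq_trans _ (base_eq x0 k l0)). unfold pth in Hp1. simpl. rewrite <- Hp1. reflexivity.
Qed.

Lemma const_RWE {L : Type} {X : L -> Type} (op : forall l, (X l -> Prop) -> Prop)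
  (x0 : forall l, X l) (Htop : forall l, is_topology (op l)) (Hlpc : forall l, lpc_at (op l) (x0 l)) (l0 : L) :
  RWE (wedge_open op x0) (constp (wedge_open op x0) (wedge_q x0 (existT X l0 (x0 l0)))).
Proof.
  intros Ucal HUo HUp. destruct (HUo _ HUp) as [l [Hl1 [Hl2 Hl3]]].
  set (W := fun w => forall S, In S l -> S (constp (wedge_open op x0) w)).
  assert (HW : wedge_open op x0 W) by (apply W_open; auto).
  assert (Hg : forall k, exists N, goodN op x0 W k N) by (apply (goodN_ex op x0 Hlpc W l0); auto).
  exists (fun w => exists k x N, goodN op x0 W k N /\ N x /\ w = wedge_q x0 (existT X k x)).
  split; [apply V0_open; auto|]. split.
  - destruct (Hg l0) as [N HN]. exists l0, (x0 l0), N. split; auto. split; [apply HN | reflexivity].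
  - intros a [k [x [N [[HN1 [HN2 [HN3 HN4]]] [Hx ->]]]]].
    destruct (HN4 (x0 k) x HN2 Hx) as [p [Hp0 [Hp1 Hpt]]].
    exists (push op x0 k p). split; [|split].
    + apply Hl3. intros S HS. destruct (Hl1 S HS) as [K [U [HK [HU HSe]]]].
      rewrite HSe. intros t Ht. specialize (HN3 _ (Hpt t) S HS). rewrite HSe in HN3.
      exact (HN3 t Ht).
    + refine (eq_trans _ (base_eq x0 k l0)). unfold pth in Hp0. simpl. rewrite <- Hp0. reflexivity.
    + simpl. unfold pth in *. simpl. rewrite Hp1. reflexivity.
Qed.

Lemma pull_CO {L : Type} {X : L -> Type} (op : forall l, (X l -> Prop) -> Prop)
  (x0 : forall l, X l) (l : L) (Ucal : Path (wedge_open op x0) -> Prop) :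
  CO_open (wedge_open op x0) Ucal -> CO_open (op l) (fun q => Ucal (push op x0 l q)).
Proof.
  intros HU q Hq. destruct (HU _ Hq) as [ls [H1 [H2 H3]]].
  exists (map (fun S q' => S (push op x0 l q')) ls). split; [|split].
  - intros S' HS'. apply in_map_iff in HS'. destruct HS' as [S [<- HS]].
    destruct (H1 S HS) as [K [U [HK [HU' HSe]]]].
    exists K, (fun x => U (wedge_q x0 (existT X l x))). split; [exact HK|]. split; [exact (HU' l)|].
    intro p. rewrite HSe. simpl. tauto.
  - intros S' HS'. apply in_map_iff in HS'. destruct HS' as [S [<- HS]]. exact (H2 S HS).
  - intros q' Hq'. apply H3. intros S HS.
    apply (Hq' (fun q' => S (push op x0 l q'))). apply in_map_iff. exists S; auto.
Qed.

Lemma push_at {L : Type} {X : L -> Type} (op : forall l, (X l -> Prop) -> Prop)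
  (x0 : forall l, X l) (l : L) (q : Path (op l)) t :
  pth (push op x0 l q) t = wedge_q x0 (existT X l (pth q t)).
Proof. reflexivity. Qed.

Lemma push_LWE {L : Type} {X : L -> Type} (op : forall l, (X l -> Prop) -> Prop)
  (x0 : forall l, X l) (Htop : forall l, is_topology (op l))
  (Hcl : forall l, op l (fun x => x <> x0 l)) (l : L) (p : Path (op l)) :
  well_ended (op l) p -> pth p I0 <> x0 l -> LWE (wedge_open op x0) (push op x0 l p).
Proof.
  intros Hwe Hne Ucal HUo HUp.
  destruct (Hwe _ (pull_CO op x0 l Ucal HUo) HUp) as [V0 [V1 [HV0 [HV1 [Hp0 [Hp1 Hq]]]]]].
  exists (fun w => exists x, (V0 x /\ x <> x0 l) /\ w = wedge_q x0 (existT X l x)). split; [|split].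
  - apply img_open; auto. apply (proj1 (proj2 (Htop l))); auto. intros x [_ H]; exact H.
  - exists (pth p I0). split; auto.
  - intros a [x [[Hx _] ->]]. destruct (Hq x (pth p I1) Hx Hp1) as [q [Hq1 [Hq2 Hq3]]].
    exists (push op x0 l q). split; [exact Hq1|]. rewrite !push_at, Hq2, Hq3. auto.
Qed.

Lemma push_RWE {L : Type} {X : L -> Type} (op : forall l, (X l -> Prop) -> Prop)
  (x0 : forall l, X l) (Htop : forall l, is_topology (op l))
  (Hcl : forall l, op l (fun x => x <> x0 l)) (l : L) (p : Path (op l)) :
  well_ended (op l) p -> pth p I1 <> x0 l -> RWE (wedge_open op x0) (push op x0 l p).
Proof.
  intros Hwe Hne Ucal HUo HUp.
  destruct (Hwe _ (pull_CO op x0 l Ucal HUo) HUp) as [V0 [V1 [HV0 [HV1 [Hp0 [Hp1 Hq]]]]]].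
  exists (fun w => exists x, (V1 x /\ x <> x0 l) /\ w = wedge_q x0 (existT X l x)). split; [|split].
  - apply img_open; auto. apply (proj1 (proj2 (Htop l))); auto. intros x [_ H]; exact H.
  - exists (pth p I1). split; auto.
  - intros b [x [[Hx _] ->]]. destruct (Hq (pth p I0) x Hp0 Hx) as [q [Hq1 [Hq2 Hq3]]].
    exists (push op x0 l q). split; [exact Hq1|]. rewrite !push_at, Hq2, Hq3. auto.
Qed.

Theorem lemma4p21 (L : Type) (X : L -> Type)
  (op : forall l, (X l -> Prop) -> Prop) (x0 : forall l, X l)
  (Htop : forall l, is_topology (op l))
  (Hwep : forall l, wep_connected (op l))
  (Hlpc : forall l, lpc_at (op l) (x0 l))
  (Hcl : forall l, op l (fun x => x <> x0 l)) :
  wep_connected (wedge_open op x0).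
Proof.
  intros y z.
  destruct (wedge_surj x0 y) as [[l x] ->].
  destruct (wedge_surj x0 z) as [[m x'] ->].
  set (base := wedge_q x0 (existT X l (x0 l))).
  assert (HA : exists A : Path (wedge_open op x0), LWE (wedge_open op x0) A /\
     pth A I0 = wedge_q x0 (existT X l x) /\ pth A I1 = base).
  { destruct (classic (x = x0 l)) as [E | E].
    - subst x. exists (constp (wedge_open op x0) base). split; [apply const_LWE; auto|]. split; reflexivity.
    - destruct (Hwep l x (x0 l)) as [p [Hp [Hp0 Hp1]]].
      exists (push op x0 l p). split. apply push_LWE; auto. congruence.
      rewrite !push_at, Hp0, Hp1. split; reflexivity. }
  assert (HB : exists B : Path (wedge_open op x0), RWE (wedge_open op x0) B /\
     pth B I0 = base /\ pth B I1 = wedge_q x0 (existT X m x')).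
  { destruct (classic (x' = x0 m)) as [E | E].
    - subst x'. exists (constp (wedge_open op x0) base). split; [apply const_RWE; auto|].
      split; [reflexivity|]. apply base_eq.
    - destruct (Hwep m (x0 m) x') as [p [Hp [Hp0 Hp1]]].
      exists (push op x0 m p). split. apply push_RWE; auto. congruence.
      rewrite !push_at, Hp0, Hp1. split; [apply base_eq | reflexivity]. }
  destruct HA as [A [HA [HA0 HA1]]]. destruct HB as [B [HB [HB0 HB1]]].
  assert (H : pth A I1 = pth B I0) by congruence.
  exists (cat A B H). split. apply cat_we; auto. rewrite cat_I0, cat_I1. auto.
Qed.
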